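(* Let $I\subset\mathbb{R}$ be an interval, $a,b\in I$ with $a<b$, and let $f:I\to\mathbb{R}$ be absolutely continuous on the interior $I^{\circ}$ of $I$ with $f''\in L[a,b]$, and suppose $|f''|$ belongs to the class $Q(I)$. If $f(a)=f(b)=f\left(\frac{a+b}{2}\right)$, then \[ \left|\frac{1}{b-a}\int_a^b f(x)\,dx-f\left(\frac{a+b}{2}\right)\right|\le \frac{(b-a)^2}{6}\left(\frac{12\ln 2-8\ln 3+1}{2}\right)\left[|f''(a)|+|f''(b)|\right]. \] If moreover $M>0$ is such that $|f''(x)|<M$ for all $x\in[a,b]$, then \[ \left|\frac{1}{b-a}\int_a^b f(x)\,dx-f\left(\frac{a+b}{2}\right)\right|\le \frac{(b-a)^2}{3}\left(\frac{12\ln 2-8\ln 3+1}{2}\right)M. \]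
   Context: A function $g:I\to\mathbb{R}$ belongs to the class $Q(I)$ (is a Godunova–Levin function) if $g$ is non-negative and for all $x,y\in I$ and $t\in(0,1)$, \[ g(tx+(1-t)y)\le \frac{g(x)}{t}+\frac{g(y)}{1-t}. \] *)

(* Defs.v *)
From HB Require Import structures.
From mathcomp Require Import all_boot all_order all_algebra.
From mathcomp Require Import all_classical all_reals all_analysis.
Set Implicit Arguments. Unset Strict Implicit. Unset Printing Implicit Defensive.
Import Order.TTheory GRing.Theory Num.Theory.
Import numFieldNormedType.Exports.
Local Open Scope classical_set_scope.
Local Open Scope ring_scope.

Definition GL_class {R : realType} (I : set R) (g : R -> R) : Prop :=
  (forall x, I x -> 0 <= g x) /\
  (forall x y t, I x -> I y -> 0 < t < 1 ->
     g (t * x + (1 - t) * y) <= g x / t + g y / (1 - t)).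

Definition abs_continuous_on {R : realType} (c d : R) (f : R -> R) : Prop :=
  forall eps : R, 0 < eps -> exists2 delta : R, 0 < delta &
    forall (n : nat) (u v : nat -> R),
      (forall i, (i < n)%N -> c <= u i /\ u i <= v i /\ v i <= d) ->
      (forall i, (i.+1 < n)%N -> v i <= u i.+1) ->
      \sum_(i < n) (v i - u i) < delta ->
      \sum_(i < n) `|f (v i) - f (u i)| < eps.

Definition abs_continuous_in {R : realType} (E : set R) (f : R -> R) : Prop :=
  forall c d, c <= d -> `[c, d] `<=` E -> abs_continuous_on c d f.

(* Main.v *)
From HB Require Import structures.
Require Import Defs.
From mathcomp Require Import all_boot all_order all_algebra.
From mathcomp Require Import all_classical all_reals all_analysis.
From mathcomp Require Import ring lra.
Import Order.TTheory GRing.Theory Num.Theory.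
Import numFieldNormedType.Exports.
Local Open Scope classical_set_scope.
Local Open Scope ring_scope.

Set Implicit Arguments. Unset Strict Implicit.
Section H.
Context {R : realType}.
Implicit Types (f g : R -> R) (x : R).

Lemma dD f g x df dg : is_derive x 1 f df -> is_derive x 1 g dg ->
  is_derive x 1 (fun y => f y + g y) (df + dg).
Proof. by move=> H1 H2; exact: is_deriveD. Qed.

Lemma dB f g x df dg : is_derive x 1 f df -> is_derive x 1 g dg ->
  is_derive x 1 (fun y => f y - g y) (df - dg).
Proof. by move=> H1 H2; exact: is_deriveB. Qed.

Lemma dM f g x df dg : is_derive x 1 f df -> is_derive x 1 g dg ->
  is_derive x 1 (fun y => f y * g y) (f x * dg + g x * df).
Proof. by move=> H1 H2; exact: is_deriveM. Qed.

Lemma dC x (c : R) : is_derive x 1 (fun _ => c) 0.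
Proof. exact: is_derive_cst. Qed.

Lemma dI x : is_derive x 1 (fun y : R => y) 1.
Proof. exact: is_derive_id. Qed.

Lemma dLn g x dg : 0 < g x -> is_derive x 1 g dg ->
  is_derive x 1 (fun y => ln (g y)) ((g x)^-1 * dg).
Proof. by move=> gx H; have := is_derive1_comp (is_derive1_ln gx) H. Qed.

Lemma mono_bound (E G e gd : R -> R) c d : c <= d ->
  (forall x, c <= x <= d -> is_derive x 1 E (e x) /\ is_derive x 1 G (gd x)) ->
  (forall x, c < x < d -> `|e x| <= gd x) ->
  `|E d - E c| <= G d - G c.
Proof.
move=> cd HD Hb.
have cont (F : R -> R) (dF : R -> R) : (forall x, c <= x <= d -> is_derive x 1 F (dF x)) ->
   {within `[c, d], continuous F}.
  move=> HF; apply: continuous_in_subspaceT => x; rewrite inE /= in_itv /= => xcd.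
  apply: differentiable_continuous; apply/derivable1_diffP.
  by have [] := HF x xcd.
have H1 : forall x, c <= x <= d -> is_derive x 1 (fun y => G y - E y) (gd x - e x).
  by move=> x xcd; have [? ?] := HD x xcd; apply: dB.
have H2 : forall x, c <= x <= d -> is_derive x 1 (fun y => G y + E y) (gd x + e x).
  by move=> x xcd; have [? ?] := HD x xcd; apply: dD.
have m1 := @ger0_derive1_ndecr R (fun y => G y - E y) c d.
have m2 := @ger0_derive1_ndecr R (fun y => G y + E y) c d.
have opn x : x \in `]c, d[ -> c <= x <= d.
  by rewrite in_itv /= => /andP[/ltW -> /ltW ->].
have opn' x : x \in `]c, d[ -> c < x < d by rewrite in_itv.
rewrite ler_norml; apply/andP; split.
- have : G c + E c <= G d + E d.
    apply: m2 => //; last exact: cont H2.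
    + by move=> x /opn xo; exact: (@ex_derive _ _ _ _ _ _ _ (H2 x xo)).
    + move=> x /[dup] /opn xo /opn' xo'; rewrite derive1E.
      have -> := @derive_val _ _ _ _ _ _ _ (H2 x xo).
      by have := Hb x xo'; rewrite ler_norml => /andP[]; lra.
  lra.
- have : G c - E c <= G d - E d.
    apply: m1 => //; last exact: cont H1.
    + by move=> x /opn xo; exact: (@ex_derive _ _ _ _ _ _ _ (H1 x xo)).
    + move=> x /[dup] /opn xo /opn' xo'; rewrite derive1E.
      have -> := @derive_val _ _ _ _ _ _ _ (H1 x xo).
      by have := Hb x xo'; rewrite ler_norml => /andP[]; lra.
  lra.
Qed.

Lemma int_conv (I : set R) : is_interval I -> forall x y z,
  interior I x -> interior I z -> x <= y <= z -> interior I y.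
Proof.
move=> iI x y z Sx Sz /andP[xy yz].
case: (eqVneq x y) => [<-//|nxy]; case: (eqVneq y z) => [->//|nyz].
have xy' : x < y by rewrite lt_neqAle nxy.
have yz' : y < z by rewrite lt_neqAle nyz.
rewrite /interior /=; apply/nbhs_ballP; exists (Num.min (y - x) (z - y)).
  by rewrite /= lt_min !subr_gt0 xy' yz'.
move=> w; rewrite -ball_normE /ball_ /= lt_min => /andP[h1 h2].
apply: (iI x z); [exact: interior_subset|exact: interior_subset|].
move: h1 h2; rewrite !ltr_norml => /andP[? ?] /andP[? ?].
by apply/andP; split; lra.
Qed.

Lemma int_ext (I : set R) a : interior I a -> exists2 e, 0 < e & interior I (a - e) /\ interior I (a + e).
Proof.
move=> Ia.
have : nbhs a (interior I) by apply: open_nbhs_nbhs; split => //; exact: open_interior.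
move/nbhs_ballP => [e /= e0 He]; exists (e / 2); first by rewrite divr_gt0.
split; apply: He; rewrite -ball_normE /ball_ /=.
  by rewrite opprB addrC subrK gtr0_norm ?divr_gt0 // ltr_pdivrMr // ltr_pMr // ltr1n.
by rewrite opprD addrA subrr add0r normrN gtr0_norm ?divr_gt0 // ltr_pdivrMr // ltr_pMr // ltr1n.
Qed.

Lemma P_der (f : R -> R) (a0 u : R) : a0 < u ->
  (forall x, a0 <= x <= u -> derivable f x 1) ->
  forall x, a0 < x < u ->
  is_derive x 1 (fun y => \int[lebesgue_measure]_(t in `[a0, y]) f t) (f x).
Proof.
move=> a0u df x /andP[ax xu].
have cf : {within `[a0, u], continuous f}.
  apply: derivable_within_continuous => y; rewrite in_itv /=; exact: df.
have intf : lebesgue_measure.-integrable `[a0, u] (EFin \o f).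
  by apply: continuous_compact_integrable => //; exact: segment_compact.
have cx : {for x, continuous f}.
  by apply: differentiable_continuous; apply/derivable1_diffP; apply: df; rewrite !ltW.
have [D1 D2] := continuous_FTC1_closed xu intf ax cx.
have := derivableP D1; rewrite -derive1E D2; exact.
Qed.

Lemma int_FTC (f P : R -> R) a b : a < b ->
  (forall x, a <= x <= b -> is_derive x 1 P (f x)) ->
  (forall x, a <= x <= b -> derivable f x 1) ->
  \int[lebesgue_measure]_(x in `[a, b]) f x = P b - P a.
Proof.
move=> ab HP Hf.
have cf : {within `[a, b], continuous f}.
  apply: derivable_within_continuous => y; rewrite in_itv /=; exact: Hf.
have cP x : a <= x <= b -> {for x, continuous P}.
  move=> xab; apply: differentiable_continuous; apply/derivable1_diffP.
  exact: (@ex_derive _ _ _ _ _ _ _ (HP x xab)).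
have H := @continuous_FTC2 R f P a b ab cf.
rewrite /Rintegral H //.
- split.
- move=> x; rewrite in_itv /= => /andP[? ?].
  by apply: (@ex_derive _ _ _ _ _ _ _ (HP x _)); rewrite !ltW.
- by apply: cvg_at_right_filter; apply: cP; rewrite lexx ltW.
- by apply: cvg_at_left_filter; apply: cP; rewrite lexx ltW.
- move=> x; rewrite in_itv /= => /andP[? ?].
  rewrite derive1E; apply: (@derive_val _ _ _ _ _ _ _ (HP x _)).
  by rewrite !ltW.
Qed.

Lemma dN f x df : is_derive x 1 f df -> is_derive x 1 (fun y => - f y) (- df).
Proof. by move=> H; exact: is_deriveN. Qed.

Lemma absk (k v w : R) : k <= 0 -> `|v| <= w -> `|k * v| <= - k * w.
Proof.
move=> k0 vw; rewrite normrM ler0_norm //; apply: ler_wpM2l => //.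
by rewrite oppr_ge0.
Qed.

Lemma absk' (k v w : R) : 0 <= k -> `|v| <= w -> `|k * v| <= k * w.
Proof. by move=> k0 vw; rewrite normrM ger0_norm //; apply: ler_wpM2l. Qed.

Definition isd (x : R) (f : R -> R) (df : R) : Prop := is_derive x 1 f df.

Lemma isdE x f df : isd x f df -> is_derive x 1 f df.
Proof. by []. Qed.
Lemma eD f g x df dg : isd x f df -> isd x g dg -> isd x (fun y => f y + g y) (df + dg).
Proof. exact: dD. Qed.
Lemma eB f g x df dg : isd x f df -> isd x g dg -> isd x (fun y => f y - g y) (df - dg).
Proof. exact: dB. Qed.
Lemma eM f g x df dg : isd x f df -> isd x g dg -> isd x (fun y => f y * g y) (f x * dg + g x * df).
Proof. exact: dM. Qed.
Lemma eN f x df : isd x f df -> isd x (fun y => - f y) (- df).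
Proof. exact: dN. Qed.
Lemma eC x (c : R) : isd x (fun _ => c) 0.
Proof. exact: dC. Qed.
Lemma eI x : isd x (fun y : R => y) 1.
Proof. exact: dI. Qed.
Lemma eV x (c : R) : isd x (fun _ => c^-1) 0.
Proof. exact: dC. Qed.
Lemma eLn g x dg : 0 < g x -> isd x g dg -> isd x (fun y => ln (g y)) ((g x)^-1 * dg).
Proof. exact: dLn. Qed.
Lemma eEq x f df df' : isd x f df' -> df' = df -> isd x f df.
Proof. by move=> H <-. Qed.

Lemma isd_der x f df : isd x f df -> derivable f x 1.
Proof. by move=> H; exact: (@ex_derive _ _ _ _ _ _ _ H). Qed.

Lemma mono_bound2 (E G e gd : R -> R) c d : c <= d ->
  (forall x, c <= x <= d -> derivable E x 1 /\ derivable G x 1) ->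
  (forall x, c < x < d -> is_derive x 1 E (e x) /\ is_derive x 1 G (gd x)) ->
  (forall x, c < x < d -> `|e x| <= gd x) ->
  `|E d - E c| <= G d - G c.
Proof.
move=> cd HD HD' Hb.
have cont (F : R -> R) : (forall x, c <= x <= d -> derivable F x 1) ->
   {within `[c, d], continuous F}.
  move=> HF; apply: continuous_in_subspaceT => x; rewrite inE /= in_itv /= => xcd.
  by apply: differentiable_continuous; apply/derivable1_diffP; apply: HF.
have H1 : forall x, c < x < d -> is_derive x 1 (fun y => G y - E y) (gd x - e x).
  by move=> x xcd; have [? ?] := HD' x xcd; apply: dB.
have H2 : forall x, c < x < d -> is_derive x 1 (fun y => G y + E y) (gd x + e x).
  by move=> x xcd; have [? ?] := HD' x xcd; apply: dD.
have C1 : forall x, c <= x <= d -> derivable (fun y => G y - E y) x 1.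
  move=> x xcd; have [? ?] := HD x xcd.
  by apply: derivableB.
have C2 : forall x, c <= x <= d -> derivable (fun y => G y + E y) x 1.
  move=> x xcd; have [? ?] := HD x xcd.
  by apply: derivableD.
have m1 := @ger0_derive1_ndecr R (fun y => G y - E y) c d.
have m2 := @ger0_derive1_ndecr R (fun y => G y + E y) c d.
have opn x : x \in `]c, d[ -> c < x < d by rewrite in_itv.
rewrite ler_norml; apply/andP; split.
- have : G c + E c <= G d + E d.
    apply: m2 => //; last exact: cont C2.
    + by move=> x /opn xo; exact: (@ex_derive _ _ _ _ _ _ _ (H2 x xo)).
    + move=> x /opn xo; rewrite derive1E.
      have -> := @derive_val _ _ _ _ _ _ _ (H2 x xo).
      by have := Hb x xo; rewrite ler_norml => /andP[]; lra.
  lra.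
- have : G c - E c <= G d - E d.
    apply: m1 => //; last exact: cont C1.
    + by move=> x /opn xo; exact: (@ex_derive _ _ _ _ _ _ _ (H1 x xo)).
    + move=> x /opn xo; rewrite derive1E.
      have -> := @derive_val _ _ _ _ _ _ _ (H1 x xo).
      by have := Hb x xo; rewrite ler_norml => /andP[]; lra.
  lra.
Qed.
End H.

Ltac dchain := repeat first [ apply: eC | apply: eI | apply: eB | apply: eD | apply: eN
   | apply: eM | apply: eLn | eassumption ].


Theorem corollary1 (R : realType) (I : set R) (a b : R) (f : R -> R) :
  is_interval I ->
  (interior I) a -> (interior I) b -> a < b ->
  abs_continuous_in (interior I) f ->
  (forall x, (interior I) x -> derivable f x 1 /\ derivable (derive1 f) x 1) ->
  lebesgue_measure.-integrable `[a, b] (EFin \o (derive1 (derive1 f))) ->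
  GL_class I (fun x => `|(derive1 (derive1 f)) x|) ->
  f a = f b -> f b = f ((a + b) / 2) ->
  `| (b - a)^-1 * (\int[lebesgue_measure]_(x in `[a, b]) f x) - f ((a + b) / 2) |
    <= (b - a) ^+ 2 / 6 * ((12 * ln 2 - 8 * ln 3 + 1) / 2)
       * (`|(derive1 (derive1 f)) a| + `|(derive1 (derive1 f)) b|)
  /\
  (forall M : R, 0 < M -> (forall x, a <= x <= b -> `|(derive1 (derive1 f)) x| < M) ->
   `| (b - a)^-1 * (\int[lebesgue_measure]_(x in `[a, b]) f x) - f ((a + b) / 2) |
    <= (b - a) ^+ 2 / 3 * ((12 * ln 2 - 8 * ln 3 + 1) / 2) * M).
Proof.
move=> iI Sa Sb ab _ Hder _ [GL0 GL] fab fbm.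
set f1 := derive1 f; set f2 := derive1 f1.
set A := `|f2 a|; set B := `|f2 b|.
set C := (12 * ln 2 - 8 * ln 3 + 1 : R).
have C0 : 0 <= C.
  have h1 : ln (1 + 8^-1 : R) <= 8^-1 by apply: le_ln1Dx; lra.
  have e1 : (1 + 8^-1 : R) = (3 * 3) / (2 * (2 * 2)) by field.
  have p2 : (2 : R) \in Num.pos by rewrite posrE.
  have p3 : (3 : R) \in Num.pos by rewrite posrE.
  have p4 : (2 * 2 : R) \in Num.pos by rewrite posrE.
  have p9 : (3 * 3 : R) \in Num.pos by rewrite posrE.
  have p8 : (2 * (2 * 2) : R) \in Num.pos by rewrite posrE.
  rewrite e1 ln_div // !lnM // in h1.
  rewrite /C; lra.
suff main : `| (b - a)^-1 * (\int[lebesgue_measure]_(x in `[a, b]) f x) - f ((a + b) / 2) |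
    <= (b - a) ^+ 2 / 6 * (C / 2) * (A + B).
  split => // M M0 HM.
  apply: (le_trans main).
  have hA : A <= M by apply/ltW/HM; rewrite lexx ltW.
  have hB : B <= M by apply/ltW/HM; rewrite lexx ltW.
  have h0 : 0 <= (b - a) ^+ 2 / 6 * (C / 2).
    by rewrite mulr_ge0 ?divr_ge0 ?sqr_ge0.
  rewrite (_ : (b - a) ^+ 2 / 3 * (C / 2) * M = (b - a) ^+ 2 / 6 * (C / 2) * (M + M)); last by field.
  by apply: ler_wpM2l => //; apply: lerD.
have [ea ea0 [Sa0 _]] := int_ext Sa.
have [eb eb0 [_ Su]] := int_ext Sb.
pose a0 := a - ea; pose u := b + eb.
have a0a : a0 < a by rewrite /a0; lra.
have bu : b < u by rewrite /u; lra.
have Sx x : a0 <= x <= u -> interior I x.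
  by move=> hx; exact: (int_conv iI Sa0 Su hx).
have df x : a0 <= x <= u -> derivable f x 1.
  by move=> hx; exact: (Hder x (Sx x hx)).1.
have df1 x : a0 <= x <= u -> derivable f1 x 1.
  by move=> hx; exact: (Hder x (Sx x hx)).2.
have Hf x : a0 <= x <= u -> isd x f (f1 x).
  by move=> hx; have := derivableP (df x hx); rewrite -derive1E.
have Hf1 x : a0 <= x <= u -> isd x f1 (f2 x).
  by move=> hx; have := derivableP (df1 x hx); rewrite -derive1E.
have ab' x : a <= x <= b -> a0 <= x <= u.
  by move=> /andP[? ?]; apply/andP; split; lra.
pose P := fun y => \int[lebesgue_measure]_(t in `[a0, y]) f t.
have HP x : a <= x <= b -> isd x P (f x).
  move=> /andP[ax xb]; apply: (@P_der R f a0 u) => //; first lra.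
  by apply/andP; split; lra.
have Hint : \int[lebesgue_measure]_(x in `[a, b]) f x = P b - P a.
  apply: (@int_FTC R f P) => //.
  - move=> x hx; first [exact: (isdE (HP x hx)) | (apply: df; exact: ab' x hx) ].
rewrite Hint.
pose h := b - a.
have h0 : 0 < h by rewrite /h subr_gt0.
have GLb x : a < x < b -> `|f2 x| <= A * h / (b - x) + B * h / (x - a).
  move=> /andP[ax xb].
  have Ia : I a by apply: interior_subset.
  have Ib : I b by apply: interior_subset.
  have bx0 : b - x != 0 by rewrite subr_eq0 gt_eqF.
  have xa0 : x - a != 0 by rewrite subr_eq0 gt_eqF.
  have hn0 : b - a != 0 by rewrite subr_eq0 gt_eqF.
  have t01 : 0 < (b - x) / h < 1.
    apply/andP; split; first by rewrite divr_gt0 // subr_gt0.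
    by rewrite ltr_pdivrMr // mul1r /h; lra.
  have := GL a b ((b - x) / h) Ia Ib t01; rewrite /=.
  rewrite (_ : (b - x) / h * a + (1 - (b - x) / h) * b = x); last first.
    by rewrite /h; field.
  rewrite -/f1 -/f2 -/A -/B.
  suff -> : A / ((b - x) / h) + B / (1 - (b - x) / h) = A * h / (b - x) + B * h / (x - a) by [].
  rewrite /h; field; by rewrite ?bx0 ?xa0 ?hn0.
pose m := (a + b) / 2; pose p := a + h / 3; pose q := b - h / 3.
pose kL := fun y => (y - a) * (y - a) / 2 - h / 6 * (y - a).
pose kR := fun y => (b - y) * (b - y) / 2 - h / 6 * (b - y).
pose g := fun y => A * h / (b - y) + B * h / (y - a).
pose EL := fun y => P y - ((y - a) - h / 6) * f y + ((y - a) * (y - a) / 2 - h / 6 * (y - a)) * f1 y.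
pose ER := fun y => P y - (- (b - y) + h / 6) * f y + ((b - y) * (b - y) / 2 - h / 6 * (b - y)) * f1 y.
pose G1 := fun y => B*h*(h*(y-a)/6 - (y-a)*(y-a)/4) + A*h*(5*h*y/6 + (b-y)*(b-y)/4 + h*h/3 * ln (b - y)).
pose G2 := fun y => - (B*h*(h*(y-a)/6 - (y-a)*(y-a)/4) + A*h*(5*h*y/6 + (b-y)*(b-y)/4 + h*h/3 * ln (b - y))).
pose G4 := fun y => A*h*(h*y/6 + (b-y)*(b-y)/4) + B*h*(5*h*y/6 - (y-a)*(y-a)/4 - h*h/3 * ln (y - a)).
pose G3 := fun y => - (A*h*(h*y/6 + (b-y)*(b-y)/4) + B*h*(5*h*y/6 - (y-a)*(y-a)/4 - h*h/3 * ln (y - a))).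
have dEL x : a <= x <= b -> is_derive x 1 EL (kL x * f2 x).
  move=> hx; have H1 := HP x hx; have H2 := Hf x (ab' x hx); have H3 := Hf1 x (ab' x hx).
  apply: isdE; apply: eEq; first by rewrite /EL; dchain.
  by rewrite /kL; field.
have dER x : a <= x <= b -> is_derive x 1 ER (kR x * f2 x).
  move=> hx; have H1 := HP x hx; have H2 := Hf x (ab' x hx); have H3 := Hf1 x (ab' x hx).
  apply: isdE; apply: eEq; first by rewrite /ER; dchain.
  by rewrite /kR; field.
have hp : a < p by rewrite /p; lra.
have hpm : p < m by rewrite /p /m /h; lra.
have hmq : m < q by rewrite /q /m /h; lra.
have hqb : q < b by rewrite /q; lra.
have pc1 : `|EL p - EL a| <= G1 p - G1 a.
  apply: (@mono_bound2 R EL G1 (fun x => kL x * f2 x) (fun x => - kL x * g x)).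
  - exact: ltW.
  - move=> x hx; have hx' : a <= x <= b by move: hx => /andP[? ?]; apply/andP; split; lra.
    split; first exact: (isd_der (dEL x hx')).
    apply: isd_der; rewrite /G1; dchain; rewrite subr_gt0; move: hx => /andP[? ?]; lra.
  - move=> x hx; have hx' : a <= x <= b by move: hx => /andP[? ?]; apply/andP; split; lra.
    split; first exact: dEL.
    have hx1 : x - a != 0 by rewrite subr_eq0 gt_eqF //; move: hx => /andP[? ?].
    have hx2 : b - x != 0 by rewrite subr_eq0 gt_eqF //; move: hx => /andP[? ?]; lra.
    apply: isdE; apply: eEq.
      rewrite /G1; dchain; rewrite subr_gt0; move: hx => /andP[? ?]; lra.
    rewrite /= /kL /g /h; field; by rewrite ?hx1 ?hx2.
  - move=> x hx; apply: absk; last by apply: GLb; move: hx => /andP[? ?]; apply/andP; split; lra.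
    rewrite /kL; move: hx => /andP[xl xr]; unfold p, m, q in xl, xr.
    rewrite (_ : (x - a) * (x - a) / 2 - h / 6 * (x - a) = - ((x - a) * (a + h / 3 - x)) / 2); last by field.
    by rewrite mulNr oppr_le0 divr_ge0 // mulr_ge0 //; lra.
have pc2 : `|EL m - EL p| <= G2 m - G2 p.
  apply: (@mono_bound2 R EL G2 (fun x => kL x * f2 x) (fun x =>  kL x * g x)).
  - exact: ltW.
  - move=> x hx; have hx' : a <= x <= b by move: hx => /andP[? ?]; apply/andP; split; lra.
    split; first exact: (isd_der (dEL x hx')).
    apply: isd_der; rewrite /G2; dchain; rewrite subr_gt0; move: hx => /andP[? ?]; lra.
  - move=> x hx; have hx' : a <= x <= b by move: hx => /andP[? ?]; apply/andP; split; lra.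
    split; first exact: dEL.
    have hx1 : x - a != 0 by rewrite subr_eq0 gt_eqF //; move: hx => /andP[? ?]; lra.
    have hx2 : b - x != 0 by rewrite subr_eq0 gt_eqF //; move: hx => /andP[? ?]; lra.
    apply: isdE; apply: eEq.
      rewrite /G2; dchain; rewrite subr_gt0; move: hx => /andP[? ?]; lra.
    rewrite /= /kL /g /h; field; by rewrite ?hx1 ?hx2.
  - move=> x hx; apply: absk'; last by apply: GLb; move: hx => /andP[? ?]; apply/andP; split; lra.
    rewrite /kL; move: hx => /andP[xl xr]; unfold p, m, q in xl, xr.
    rewrite (_ : (x - a) * (x - a) / 2 - h / 6 * (x - a) = ((x - a) * (x - (a + h / 3))) / 2); last by field.
    by rewrite divr_ge0 // mulr_ge0 //; lra.
have pc3 : `|ER q - ER m| <= G3 q - G3 m.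
  apply: (@mono_bound2 R ER G3 (fun x => kR x * f2 x) (fun x =>  kR x * g x)).
  - exact: ltW.
  - move=> x hx; have hx' : a <= x <= b by move: hx => /andP[? ?]; apply/andP; split; lra.
    split; first exact: (isd_der (dER x hx')).
    apply: isd_der; rewrite /G3; dchain; rewrite subr_gt0; move: hx => /andP[? ?]; lra.
  - move=> x hx; have hx' : a <= x <= b by move: hx => /andP[? ?]; apply/andP; split; lra.
    split; first exact: dER.
    have hx1 : x - a != 0 by rewrite subr_eq0 gt_eqF //; move: hx => /andP[? ?]; lra.
    have hx2 : b - x != 0 by rewrite subr_eq0 gt_eqF //; move: hx => /andP[? ?]; lra.
    apply: isdE; apply: eEq.
      rewrite /G3; dchain; rewrite subr_gt0; move: hx => /andP[? ?]; lra.
    rewrite /= /kR /g /h; field; by rewrite ?hx1 ?hx2.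
  - move=> x hx; apply: absk'; last by apply: GLb; move: hx => /andP[? ?]; apply/andP; split; lra.
    rewrite /kR; move: hx => /andP[xl xr]; unfold p, m, q in xl, xr.
    rewrite (_ : (b - x) * (b - x) / 2 - h / 6 * (b - x) = ((b - x) * (b - h / 3 - x)) / 2); last by field.
    by rewrite divr_ge0 // mulr_ge0 //; lra.
have pc4 : `|ER b - ER q| <= G4 b - G4 q.
  apply: (@mono_bound2 R ER G4 (fun x => kR x * f2 x) (fun x => - kR x * g x)).
  - exact: ltW.
  - move=> x hx; have hx' : a <= x <= b by move: hx => /andP[? ?]; apply/andP; split; lra.
    split; first exact: (isd_der (dER x hx')).
    apply: isd_der; rewrite /G4; dchain; rewrite subr_gt0; move: hx => /andP[? ?]; lra.
  - move=> x hx; have hx' : a <= x <= b by move: hx => /andP[? ?]; apply/andP; split; lra.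
    split; first exact: dER.
    have hx1 : x - a != 0 by rewrite subr_eq0 gt_eqF //; move: hx => /andP[? ?]; lra.
    have hx2 : b - x != 0 by rewrite subr_eq0 gt_eqF //; move: hx => /andP[? ?]; lra.
    apply: isdE; apply: eEq.
      rewrite /G4; dchain; rewrite subr_gt0; move: hx => /andP[? ?]; lra.
    rewrite /= /kR /g /h; field; by rewrite ?hx1 ?hx2.
  - move=> x hx; apply: absk; last by apply: GLb; move: hx => /andP[? ?]; apply/andP; split; lra.
    rewrite /kR; move: hx => /andP[xl xr]; unfold p, m, q in xl, xr.
    rewrite (_ : (b - x) * (b - x) / 2 - h / 6 * (b - x) = - ((b - x) * (x - (b - h / 3))) / 2); last by field.
    by rewrite mulNr oppr_le0 divr_ge0 // mulr_ge0 //; lra.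
have key : P b - P a - h * f m = (ER b - ER q) + (ER q - ER m) + (EL m - EL p) + (EL p - EL a).
  by rewrite /ER /EL; cbv beta; rewrite /p /q /m /h fab fbm; field.
have ba0 : 0 < b - a by [].
have bn0 : b - a != 0 by rewrite gt_eqF.
have pba : (b - a) \in Num.pos by rewrite posrE.
have p2 : (2 : R) \in Num.pos by rewrite posrE.
have p3 : (3 : R) \in Num.pos by rewrite posrE.
have p23 : (2 / 3 : R) \in Num.pos by rewrite posrE divr_gt0.
have L1 : ln (b - p) = ln (b - a) + ln 2 - ln 3.
  rewrite (_ : b - p = (b - a) * (2 / 3)); last by rewrite /p /h; field.
  by rewrite lnM // ln_div //; ring.
have L2 : ln (q - a) = ln (b - a) + ln 2 - ln 3.
  rewrite (_ : q - a = (b - a) * (2 / 3)); last by rewrite /q /h; field.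
  by rewrite lnM // ln_div //; ring.
have L3 : ln (b - m) = ln (b - a) - ln 2.
  rewrite (_ : b - m = (b - a) / 2); last by rewrite /m; field.
  by rewrite ln_div.
have L4 : ln (m - a) = ln (b - a) - ln 2.
  rewrite (_ : m - a = (b - a) / 2); last by rewrite /m; field.
  by rewrite ln_div.
have Tval : (G4 b - G4 q) + (G3 q - G3 m) + (G2 m - G2 p) + (G1 p - G1 a)
    = (b - a) ^+ 3 * C / 12 * (A + B).
  rewrite /G1 /G2 /G3 /G4; cbv beta; by rewrite L1 L2 L3 L4 /C /p /q /m /h; field.
have bnd : `|P b - P a - h * f m| <= (b - a) ^+ 3 * C / 12 * (A + B).
  rewrite key -Tval.
  apply: (le_trans (ler_normD _ _)); apply: lerD; last exact: pc1.
  apply: (le_trans (ler_normD _ _)); apply: lerD; last exact: pc2.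
  apply: (le_trans (ler_normD _ _)); apply: lerD; last exact: pc3.
  exact: pc4.
rewrite (_ : (b - a)^-1 * (P b - P a) - f ((a + b) / 2) = (b - a)^-1 * (P b - P a - h * f m)); last first.
  by rewrite /h /m; field; rewrite ?bn0.
rewrite normrM gtr0_norm ?invr_gt0 //.
rewrite -(ler_pM2l ba0) mulrA mulfV // mul1r.
suff -> : (b - a) * ((b - a) ^+ 2 / 6 * (C / 2) * (A + B)) = (b - a) ^+ 3 * C / 12 * (A + B) by [].
by field.
Qed.
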